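(* Let $G$ be a graph, $r$ a positive integer, and $P\subset V(G)$. Suppose $P$ has a partition $\{P_0,P_1,\dots,P_k\}$ with $\mathcal{D}_G(P_i,3)=\emptyset$ for each $i$ with $0\le i\le k$. Let $d\colon P\to[r+1]$ be a precoloring of $P$ in $G$, and suppose $G$ has an $r$-coloring $f$ with $f(v)=d(v)$ for each $v\in P_0$. Then for each $t$ with $0\le t\le k$, there exists an $(r+t)$-coloring $f_t$ of $G$ with $f_t(v)=d(v)$ for each $v\in\bigcup_{i=0}^t P_i$. In particular, $f_k$ is an $(r+k)$-coloring of $G$ with $f_k(v)=d(v)$ for each $v\in P$.
   Context: For a graph $G$, $Q\subset V(G)$ and a positive integer $k$, $\mathcal{D}_G(Q,k)=\{\{x,y\}\subset Q: x\ne y,\ d_G(x,y)\le k\}$, where $d_G$ is the distance in $G$. $[m]=\{1,\dots,m\}$. A precoloring of $P$ in $G$ is a proper coloring of $G[P]$. An $m$-coloring of $G$ is a proper coloring of $G$ using at most $m$ colors. *)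

(* Defs.v *)
From mathcomp Require Import all_boot.
Set Implicit Arguments. Unset Strict Implicit. Unset Printing Implicit Defensive.

Definition simple_graph (T : finType) (e : rel T) : Prop :=
  symmetric e /\ irreflexive e.

(* d_G(x,y) <= k : there is a walk (hence a path) from x to y with at most k edges. *)
Definition dist_le (T : finType) (e : rel T) (k : nat) (x y : T) : Prop :=
  exists p : seq T, [/\ path e x p, last x p = y & size p <= k].

(* D_G(Q,k) = empty : no two distinct vertices of Q are at distance <= k. *)
Definition D_empty (T : finType) (e : rel T) (Q : {set T}) (k : nat) : Prop :=
  forall x y, x \in Q -> y \in Q -> x != y -> ~ dist_le e k x y.

(* colours are natural numbers; [m] = {1,...,m} *)
Definition in_range (m c : nat) : bool := (1 <= c <= m).

Definition proper_on (T : finType) (e : rel T) (A : {set T}) (c : T -> nat) : Prop :=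
  forall x y, x \in A -> y \in A -> e x y -> c x != c y.

Definition m_coloring (T : finType) (e : rel T) (m : nat) (c : T -> nat) : Prop :=
  (forall x y, e x y -> c x != c y) /\ (forall x, in_range m (c x)).

Definition precoloring (T : finType) (e : rel T) (P : {set T}) (m : nat) (d : T -> nat) : Prop :=
  proper_on e P d /\ (forall x, x \in P -> in_range m (d x)).

(* {Q_0,...,Q_k} is a partition of P (blocks indexed by 'I_(k+1), pairwise
   disjoint, union equal to P; empty blocks allowed) *)
Definition is_partition_of (T : finType) (k : nat) (Q : 'I_k.+1 -> {set T}) (P : {set T}) : Prop :=
  (forall i j : 'I_k.+1, i != j -> [disjoint Q i & Q j]) /\
  \bigcup_(i < k.+1) Q i = P.

(* Main.v *)
Require Import Defs.
From mathcomp Require Import all_boot.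

Theorem lemma4 (T : finType) (e : rel T) (r k : nat) (P : {set T})
    (Q : 'I_k.+1 -> {set T}) (d : T -> nat) (f : T -> nat) :
  simple_graph e ->
  0 < r ->
  is_partition_of Q P ->
  (forall i, D_empty e (Q i) 3) ->
  precoloring e P r.+1 d ->
  m_coloring e r f ->
  (forall v, v \in Q ord0 -> f v = d v) ->
  forall t : nat, t <= k ->
    exists ft : T -> nat,
      m_coloring e (r + t) ft /\
      (forall (i : 'I_k.+1) v, i <= t -> v \in Q i -> ft v = d v).
Proof.
move=> [esym eirr] r0 [Qdisj QP] QD [dprop drange] fcol f0.
have QinP : forall i v, v \in Q i -> v \in P.
  by move=> i v vi; rewrite -QP; apply/bigcupP; exists i.
elim=> [|t IH] ht.
  exists f; rewrite addn0; split=> // i v; rewrite leqn0 => /eqP i0 vi.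
  apply: f0; suff -> : ord0 = i by []. by apply/val_inj; rewrite /= i0.
have [ft [[ftp ftr] fta]] := IH (ltnW ht).
pose j : 'I_k.+1 := Ordinal (ht : t.+1 < k.+1).
pose rec x := [exists v, (v \in Q j) && e x v && (ft x == d v)].
pose g x := if x \in Q j then d x else if rec x then r + t.+1 else ft x.
have dle : forall x, x \in Q j -> 1 <= d x <= r + t.+1.
  move=> x /QinP /drange /andP [h1 h2]; rewrite h1 /=.
  by apply: leq_trans h2 _; rewrite addnS ltnS leq_addr.
have ftle : forall x, 1 <= ft x <= r + t by move=> x; have := ftr x.
have norec : forall (i : 'I_k.+1) x, (i <= t) -> x \in Q i -> ~~ rec x.
  move=> i x it xi; apply/existsP => -[v /andP [/andP [vj exv] /eqP fx]].
  have := dprop x v (QinP _ _ xi) (QinP _ _ vj) exv.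
  by rewrite -fx (fta i x it xi) eqxx.
exists g; split; first split.
- move=> x y exy; rewrite /g.
  case xj: (x \in Q j); case yj: (y \in Q j).
  + by apply: dprop => //; apply: QinP; eauto.
  + case ry: (rec y).
      move: ry; rewrite /rec => /existsP [w /andP [/andP [wj eyw] /eqP fy]].
      case: (eqVneq x w) => [xw|xw].
        rewrite -xw in fy; rewrite -fy neq_ltn; apply/orP; left.
        by have := ftle y; rewrite addnS ltnS => /andP [].
      exfalso; apply: (QD j x w xj wj xw); exists [:: y; w].
      by rewrite /= exy eyw.
    apply/eqP => h; have : rec y by apply/existsP; exists x; rewrite xj esym exy h eqxx.
    by rewrite ry.
  + case rx: (rec x).
      move: rx; rewrite /rec => /existsP [w /andP [/andP [wj exw] /eqP fx]].
      case: (eqVneq y w) => [yw|yw].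
        rewrite -yw in fx; rewrite -fx neq_ltn; apply/orP; right.
        by have := ftle x; rewrite addnS ltnS => /andP [].
      exfalso; apply: (QD j y w yj wj yw); exists [:: x; w].
      by rewrite /= esym exy exw.
    apply/eqP => h; have : rec x by apply/existsP; exists y; rewrite yj exy h eqxx.
    by rewrite rx.
  + case rx: (rec x); case ry: (rec y).
    * move: rx ry => /existsP [v /andP [/andP [vj exv] /eqP fx]].
      move=> /existsP [w /andP [/andP [wj eyw] /eqP fy]].
      case: (eqVneq v w) => [vw|vw].
        by move: (ftp x y exy); rewrite fx fy vw eqxx.
      exfalso; apply: (QD j v w vj wj vw); exists [:: x; y; w].
      by rewrite /= esym exv exy eyw.
    * by rewrite neq_ltn; apply/orP; right; have := ftle y; rewrite addnS ltnS => /andP [].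
    * by rewrite neq_ltn; apply/orP; left; have := ftle x; rewrite addnS ltnS => /andP [].
    * exact: ftp.
- move=> x; rewrite /in_range /g; case: ifP => xj; first exact: dle.
  case: ifP => _; first by rewrite leqnn andbT addnS.
  have /andP [h1 h2] := ftle x; rewrite h1 /=; by rewrite addnS ltnW.
- move=> i v; rewrite leq_eqVlt => /orP [/eqP it|it] vi; rewrite /g.
    suff -> : j = i by rewrite vi.
    by apply/val_inj; rewrite /= it.
  have vj : (v \in Q j) = false.
    apply/negP => vj; have ij : i != j by rewrite -val_eqE /= neq_ltn it.
    by rewrite (disjointFr (Qdisj i j ij) vi) in vj.
  rewrite vj (negbTE (norec i v it vi)); exact: fta it vi.
Qed.
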